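(* Let $A\in\mathbb{R}^{n\times n}$, $B\in\mathbb{R}^{n\times m}$, $C\in\mathbb{R}^{p\times n}$, and let $\overline{K},\underline{K}\in\mathbb{R}^{m\times n}$ and $\overline{L},\underline{L}\in\mathbb{R}^{n\times p}$. Consider the linear system on $\mathbb{R}^{3n}$ \[ \begin{bmatrix} x \\ \overline{x} \\ \underline{x}\end{bmatrix}(t+1) = \begin{bmatrix} A & B\overline{K} & B\underline{K} \\ \overline{L}C & A-\overline{L}C+B\overline{K} & B\underline{K} \\ \underline{L}C & B\overline{K} & A-\underline{L}C+B\underline{K} \end{bmatrix} \begin{bmatrix} x \\ \overline{x} \\ \underline{x}\end{bmatrix}(t), \] and the set \[ \mathcal{X}=\{(x,\overline{x},\underline{x}) : x,\overline{x},\underline{x}\in\mathbb{R}^n_+,\ \underline{x}\le x\le \overline{x}\}. \] Then $\mathcal{X}$ is invariant under these dynamics (i.e., every trajectory starting in $\mathcal{X}$ remains in $\mathcal{X}$ for all $t\ge 0$) if and only if all of the following hold: \[ A+B(\overline{K}+\underline{K})\ge 0,\quad A+B\overline{K}\ge0,\quad B\overline{K}\ge0,\quad A-\overline{L}C\ge0,\quad A-\underline{L}C\ge0,\quad B\overline{K}+\underline{L}C\ge0 . \]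
   Context: All inequalities between matrices or vectors are element-wise. $\mathbb{R}^n_+$ denotes the closed nonnegative orthant. This system is the closed loop of $x(t+1)=Ax(t)+Bu(t)$, $y(t)=Cx(t)$ with two Luenberger observers $\overline{x}(t+1)=(A-\overline{L}C)\overline{x}(t)+\overline{L}y(t)+Bu(t)$, $\underline{x}(t+1)=(A-\underline{L}C)\underline{x}(t)+\underline{L}y(t)+Bu(t)$ (upper and lower estimates) and feedback $u(t)=\underline{K}\,\underline{x}(t)+\overline{K}\,\overline{x}(t)$. *)

(* Defs.v *)
From HB Require Import structures.
From mathcomp Require Import all_boot all_order all_algebra.
From mathcomp Require Import reals.
Set Implicit Arguments. Unset Strict Implicit. Unset Printing Implicit Defensive.
Import Order.TTheory GRing.Theory Num.Theory.
Local Open Scope ring_scope.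

Definition mx_nonneg (R : realType) (k l : nat) (M : 'M[R]_(k, l)) : Prop :=
  forall i j, 0 <= M i j.

Definition mx_le (R : realType) (k l : nat) (M N : 'M[R]_(k, l)) : Prop :=
  forall i j, M i j <= N i j.

(* The 3n x 3n closed-loop matrix, with state ordered (x, xbar, xlow). *)
Definition closed_loop (R : realType) (n m p : nat)
  (A : 'M[R]_n) (B : 'M[R]_(n, m)) (C : 'M[R]_(p, n))
  (Kup Klo : 'M[R]_(m, n)) (Lup Llo : 'M[R]_(n, p)) : 'M[R]_(n + n + n) :=
  block_mx
    (block_mx A (B *m Kup) (Lup *m C) (A - Lup *m C + B *m Kup))
    (col_mx (B *m Klo) (B *m Klo))
    (row_mx (Llo *m C) (B *m Kup))
    (A - Llo *m C + B *m Klo).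

Definition st_x (R : realType) (n : nat) (z : 'cV[R]_(n + n + n)) : 'cV[R]_n :=
  usubmx (usubmx z).
Definition st_xup (R : realType) (n : nat) (z : 'cV[R]_(n + n + n)) : 'cV[R]_n :=
  dsubmx (usubmx z).
Definition st_xlo (R : realType) (n : nat) (z : 'cV[R]_(n + n + n)) : 'cV[R]_n :=
  dsubmx z.

Definition in_X (R : realType) (n : nat) (z : 'cV[R]_(n + n + n)) : Prop :=
  [/\ mx_nonneg (st_x z), mx_nonneg (st_xup z), mx_nonneg (st_xlo z),
      mx_le (st_xlo z) (st_x z) & mx_le (st_x z) (st_xup z)].

Definition lin_invariant (R : realType) (k : nat) (M : 'M[R]_k) (S : 'cV[R]_k -> Prop) : Prop :=
  forall traj : nat -> 'cV[R]_k,
    (forall t, traj t.+1 = M *m traj t) -> S (traj 0%N) -> forall t, S (traj t).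

(* Main.v *)
Require Import Defs.
From HB Require Import structures.
From mathcomp Require Import all_boot all_order all_algebra.
From mathcomp Require Import reals.
From mathcomp Require Import ring lra.
Import Order.TTheory GRing.Theory Num.Theory.
Local Open Scope ring_scope.

Lemma nn_mul (R : realType) (k l q : nat) (M : 'M[R]_(k, l)) (v : 'M[R]_(l, q)) :
  mx_nonneg M -> mx_nonneg v -> mx_nonneg (M *m v).
Proof.
move=> HM Hv i j; rewrite mxE; apply: sumr_ge0 => r _; exact: mulr_ge0.
Qed.

Lemma nn_add (R : realType) (k l : nat) (M N : 'M[R]_(k, l)) :
  mx_nonneg M -> mx_nonneg N -> mx_nonneg (M + N).
Proof. by move=> HM HN i j; rewrite mxE; apply: addr_ge0. Qed.

Lemma le_nn (R : realType) (k l : nat) (M N : 'M[R]_(k, l)) :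
  mx_le M N <-> mx_nonneg (N - M).
Proof.
split=> H i j; have := H i j; rewrite !mxE; lra.
Qed.

Lemma delta_col (R : realType) (k l : nat) (M : 'M[R]_(k, l)) i j :
  (M *m delta_mx j (0 : 'I_1)) i 0 = M i j.
Proof. by rewrite -colE mxE. Qed.

Lemma step (R : realType) (n m p : nat)
  (A : 'M[R]_n) (B : 'M[R]_(n, m)) (C : 'M[R]_(p, n))
  (Kup Klo : 'M[R]_(m, n)) (Lup Llo : 'M[R]_(n, p)) (x xb xl : 'cV[R]_n) :
  closed_loop A B C Kup Klo Lup Llo *m col_mx (col_mx x xb) xl =
  col_mx (col_mx (A *m x + B *m Kup *m xb + B *m Klo *m xl)
                 (Lup *m C *m x + (A - Lup *m C + B *m Kup) *m xb + B *m Klo *m xl))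
         (Llo *m C *m x + B *m Kup *m xb + (A - Llo *m C + B *m Klo) *m xl).
Proof.
rewrite /closed_loop mul_block_col mul_block_col mul_col_mx add_col_mx mul_row_col.
by [].
Qed.

Lemma zsplit (R : realType) (n : nat) (z : 'cV[R]_(n + n + n)) :
  z = col_mx (col_mx (st_x z) (st_xup z)) (st_xlo z).
Proof. by rewrite /st_x /st_xup /st_xlo !vsubmxK. Qed.

Lemma stE (R : realType) (n : nat) (x xb xl : 'cV[R]_n) :
  [/\ st_x (col_mx (col_mx x xb) xl) = x,
      st_xup (col_mx (col_mx x xb) xl) = xb &
      st_xlo (col_mx (col_mx x xb) xl) = xl].
Proof. by rewrite /st_x /st_xup /st_xlo ?col_mxKu ?col_mxKd ?col_mxKu. Qed.
Arguments stE {R n}.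


Lemma ids (R : realType) (n m p : nat)
  (A : 'M[R]_n) (B : 'M[R]_(n, m)) (C : 'M[R]_(p, n))
  (Kup Klo : 'M[R]_(m, n)) (Lup Llo : 'M[R]_(n, p)) (x xb xl : 'cV[R]_n) :
  let x' := A *m x + B *m Kup *m xb + B *m Klo *m xl in
  let xb' := Lup *m C *m x + (A - Lup *m C + B *m Kup) *m xb + B *m Klo *m xl in
  let xl' := Llo *m C *m x + B *m Kup *m xb + (A - Llo *m C + B *m Klo) *m xl in
  [/\ xl' = (A + B *m (Kup + Klo)) *m xl + (B *m Kup + Llo *m C) *m (x - xl)
            + B *m Kup *m (xb - x),
      x' - xl' = (A - Llo *m C) *m (x - xl) &
      xb' - x' = (A - Lup *m C) *m (xb - x)].
Proof.
move=> x' xb' xl'; rewrite /x' /xb' /xl'.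
rewrite !mulmxDr ?mulmxBr !mulmxDl ?mulmxBl ?mulmxDl ?mulmxBr ?mulmxN ?mulNmx.
move: (A *m x) (A *m xb) (A *m xl) (B *m Kup *m x) (B *m Kup *m xb) (B *m Kup *m xl)
  (B *m Klo *m xl) (Llo *m C *m x) (Llo *m C *m xl) (Lup *m C *m x) (Lup *m C *m xb)
  (B *m Klo *m xb) (B *m Klo *m x).
move=> a1 a2 a3 b1 b2 b3 c1 d1 d2 e1 e2 f1 f2.
split; apply/matrixP => i j; rewrite !mxE; ring.
Qed.
Arguments ids {R n m p}.

Lemma inv_iff (R : realType) (n : nat) (M : 'M[R]_(n + n + n)) :
  lin_invariant M (@in_X R n) <-> (forall z, in_X z -> in_X (M *m z)).
Proof.
split.
- move=> H z Hz.
  have := H (fun t => iter t (mulmx M) z) (fun t => erefl) Hz 1%N; done.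
- move=> H traj Ht H0; elim=> [|t IH] //; rewrite Ht; exact: H.
Qed.

Lemma delta_nn (R : realType) (n : nat) (j : 'I_n) :
  mx_nonneg (delta_mx j (0 : 'I_1) : 'cV[R]_n).
Proof. by move=> i k; rewrite mxE ler0n. Qed.

Lemma zero_nn (R : realType) (k l : nat) : mx_nonneg (0 : 'M[R]_(k, l)).
Proof. by move=> i j; rewrite mxE. Qed.

Lemma one_step (R : realType) (n m p : nat)
  (A : 'M[R]_n) (B : 'M[R]_(n, m)) (C : 'M[R]_(p, n))
  (Kup Klo : 'M[R]_(m, n)) (Lup Llo : 'M[R]_(n, p)) :
  (forall z, in_X z -> in_X (closed_loop A B C Kup Klo Lup Llo *m z)) <->
  (forall x xb xl : 'cV[R]_n, mx_nonneg xl -> mx_nonneg (x - xl) -> mx_nonneg (xb - x) ->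
     [/\ mx_nonneg ((A + B *m (Kup + Klo)) *m xl + (B *m Kup + Llo *m C) *m (x - xl)
            + B *m Kup *m (xb - x)),
      mx_nonneg ((A - Llo *m C) *m (x - xl)) &
      mx_nonneg ((A - Lup *m C) *m (xb - x))]).
Proof.
split.
- move=> H x xb xl Hl Hd1 Hd2.
  have Hx : mx_nonneg x by rewrite -(subrK xl x); apply: nn_add.
  have Hxb : mx_nonneg xb by rewrite -(subrK x xb); apply: nn_add.
  have Hz : in_X (col_mx (col_mx x xb) xl).
    rewrite /in_X; case: (stE x xb xl) => -> -> ->; split => //; exact/le_nn.
  have := H _ Hz; rewrite step.
  case: (ids A B C Kup Klo Lup Llo x xb xl) => I1 I2 I3.
  rewrite /in_X; case: (stE (A *m x + B *m Kup *m xb + B *m Klo *m xl)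
    (Lup *m C *m x + (A - Lup *m C + B *m Kup) *m xb + B *m Klo *m xl) (Llo *m C *m x + B *m Kup *m xb + (A - Llo *m C + B *m Klo) *m xl)) => -> -> ->; case=> _ _ H3 H4 H5.
  split; [by rewrite -I1 | rewrite -I2; exact/le_nn | rewrite -I3; exact/le_nn].
- move=> H z; rewrite (@zsplit _ _ z).
  set x := st_x z; set xb := st_xup z; set xl := st_xlo z.
  rewrite /in_X; case: (stE x xb xl) => -> -> ->; case=> _ _ Hl H1 H2.
  move/le_nn: H1 => H1; move/le_nn: H2 => H2.
  have [J1 J2 J3] := H x xb xl Hl H1 H2.
  rewrite step; case: (stE (A *m x + B *m Kup *m xb + B *m Klo *m xl) (Lup *m C *m x + (A - Lup *m C + B *m Kup) *m xb + B *m Klo *m xl) (Llo *m C *m x + B *m Kup *m xb + (A - Llo *m C + B *m Klo) *m xl)) => -> -> ->.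
  case: (ids A B C Kup Klo Lup Llo x xb xl) => I1 I2 I3.
  rewrite -I1 in J1; rewrite -I2 in J2; rewrite -I3 in J3.
  set x' := A *m x + _ + _ in J2 J3 *.
  set xb' := Lup *m C *m x + _ + _ in J3 *.
  set xl' := Llo *m C *m x + _ + _ in J1 J2 *.
  have Hx : mx_nonneg x' by rewrite -(subrK xl' x'); apply: nn_add.
  have Hxb : mx_nonneg xb' by rewrite -(subrK x' xb'); apply: nn_add.
  split => //; exact/le_nn.
Qed.

Theorem lemma1 (R : realType) (n m p : nat)
  (A : 'M[R]_n) (B : 'M[R]_(n, m)) (C : 'M[R]_(p, n))
  (Kup Klo : 'M[R]_(m, n)) (Lup Llo : 'M[R]_(n, p)) :
  lin_invariant (closed_loop A B C Kup Klo Lup Llo) (@in_X R n) <->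
  (mx_nonneg (A + B *m (Kup + Klo)) /\
   mx_nonneg (A + B *m Kup) /\
   mx_nonneg (B *m Kup) /\
   mx_nonneg (A - Lup *m C) /\
   mx_nonneg (A - Llo *m C) /\
   mx_nonneg (B *m Kup + Llo *m C)).
Proof.
rewrite inv_iff one_step; split.
- move=> Q.
  have E1 : forall j, [/\ forall i, 0 <= (A + B *m (Kup + Klo)) i j,
     forall i, 0 <= (B *m Kup + Llo *m C) i j,
     forall i, 0 <= (A - Llo *m C) i j,
     forall i, 0 <= (B *m Kup) i j &
     forall i, 0 <= (A - Lup *m C) i j].
    move=> j; set d := (delta_mx j (0 : 'I_1) : 'cV[R]_n).
    have Hd : mx_nonneg d by exact: delta_nn.
    have Z : mx_nonneg (0 : 'cV[R]_n) by exact: zero_nn.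
    have Sdd : mx_nonneg (d - d) by rewrite subrr.
    have Sd0 : mx_nonneg (d - 0) by rewrite subr0.
    have S00 : mx_nonneg (0 - 0 : 'cV[R]_n) by rewrite subrr.
    have [J1 _ _] := Q d d d Hd Sdd Sdd.
    have [K1 K2 _] := Q d d 0 Z Sd0 Sdd.
    have [L1 _ L3] := Q 0 d 0 Z S00 Sd0.
    move: J1 K1 K2 L1 L3.
    rewrite !subrr !subr0 !mulmx0 !addr0 !add0r => J1 K1 K2 L1 L3.
    split=> i.
    + by have := J1 i 0; rewrite delta_col.
    + by have := K1 i 0; rewrite delta_col.
    + by have := K2 i 0; rewrite delta_col.
    + by have := L1 i 0; rewrite delta_col.
    + by have := L3 i 0; rewrite delta_col.
  do ![split]; move=> i j; have [e1 e2 e3 e4 e5] := E1 j => //.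
  have := e2 i; have := e3 i; rewrite !mxE => h1 h2 ; lra.
- case=> c1 [_ [c3 [c4 [c5 c6]]]] x xb xl Hl H1 H2; split.
  + by apply: nn_add; [apply: nn_add|]; apply: nn_mul.
  + exact: nn_mul.
  + exact: nn_mul.
Qed.
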